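(* Let $\theta>0$ be a real number and, for integers $N\ge 1$ and $r\ge 0$, let \[ W_N(r)=\sum_{\pi \in \mathfrak{S}_N \text{ $r$-winnable}} \theta^{\pi^{-1}(N)-1}. \] Then $W_N(0)=(N-1)!$, and for $1\le r\le N-1$, \[ W_N(r) = (N-1)!\; r \sum_{i=r}^{N-1} \frac{\theta^i}{i}. \]
   Context: $\mathfrak{S}_N$ is the set of permutations $\pi=[\pi_1\pi_2\cdots\pi_N]$ of $\{1,\dots,N\}$ in one-line notation; $\pi^{-1}(N)$ is the position of the entry $N$. A left-to-right maximum of $\pi$ is an entry $\pi_j$ larger than every $\pi_i$ with $i<j$. For $r\ge 0$, the $r$-positional strategy rejects $\pi_1,\dots,\pi_r$ and then accepts the first subsequent left-to-right maximum (so for $r=0$ it accepts $\pi_1$). The permutation $\pi$ is called $r$-winnable if this strategy accepts the entry $N$. *)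

(* Defs.v *)
(* Permutations of {1..N} are modelled as 'S_N = {perm 'I_N},
   i.e. permutations of {0,..,N-1}; the one-line entry pi_{j+1} of the paper is
   (pi j).+1, so the entry N is the value N.-1 and positions are 0-indexed. *)
From HB Require Import structures.
From mathcomp Require Import all_boot all_order all_algebra all_fingroup.
Set Implicit Arguments. Unset Strict Implicit. Unset Printing Implicit Defensive.
Import Order.TTheory GRing.Theory Num.Theory.

Definition ltr_max (N : nat) (pi : 'S_N) (j : 'I_N) : bool :=
  [forall i : 'I_N, (i < j) ==> (pi i < pi j)].

(* The r-positional strategy rejects the first r entries (0-indexed positions
   0..r-1) and accepts the first later left-to-right maximum.  pi is r-winnable
   iff the accepted entry exists and is the entry N (value N.-1 here). *)
Definition winnable (N r : nat) (pi : 'S_N) : bool :=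
  [exists j : 'I_N,
     [&& r <= j, ltr_max pi j,
         [forall k : 'I_N, ((r <= k) && (k < j)) ==> ~~ ltr_max pi k]
       & (pi j : nat) == N.-1]].

(* theta^(pi^{-1}(N) - 1): the unique 0-indexed position j with pi j = N.-1. *)
Definition weight (R : nzRingType) (theta : R) (N : nat) (pi : 'S_N) : R :=
  (\sum_(j : 'I_N | (pi j : nat) == N.-1) theta ^+ j)%R.

Definition W (R : nzRingType) (theta : R) (N r : nat) : R :=
  (\sum_(pi : 'S_N | winnable r pi) weight theta pi)%R.

(* Main.v *)
Require Import Defs.
From HB Require Import structures.
From mathcomp Require Import all_boot all_order all_algebra all_fingroup.
Import Order.TTheory GRing.Theory Num.Theory.
Set Implicit Arguments. Unset Strict Implicit. Unset Printing Implicit Defensive.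

Definition isam n (pi : 'S_n.+1) (j m : 'I_n.+1) : bool :=
  (m < j) && [forall i : 'I_n.+1, ((i < j) && (i != m)) ==> (pi i < pi m)].

Lemma ord_neq n (a b : 'I_n) : a < b -> (a != b) && (b != a).
Proof. by move=> ab; apply/andP; split; apply/eqP => E; move: ab; rewrite E ltnn. Qed.

Lemma isam_uniq n (pi : 'S_n.+1) j m m' : isam pi j m -> isam pi j m' -> m = m'.
Proof.
case/andP=> mj /forallP H1; case/andP=> m'j /forallP H2.
apply/eqP; apply/negPn/negP => ne.
have h1 := implyP (H1 m'); have h2 := implyP (H2 m).
have := h1; rewrite m'j eq_sym ne => /(_ isT) a.
have := h2; rewrite mj ne => /(_ isT) b.
by move: (ltn_trans a b); rewrite ltnn.
Qed.

Lemma isam_exists n (pi : 'S_n.+1) (j : 'I_n.+1) : 0 < j -> exists m, isam pi j m.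
Proof.
move=> j0.
case: (@arg_maxnP _ ord0 (fun i : 'I_n.+1 => i < j) (fun i => val (pi i)) j0) => m mj Hm.
exists m; rewrite /isam mj /=; apply/forallP => i; apply/implyP => /andP [ij im].
have := Hm i ij; rewrite /= leq_eqVlt => /orP [/eqP e|//].
by move: im; rewrite (perm_inj (val_inj e)) eqxx.
Qed.

Lemma pos_uniq n (pi : 'S_n.+1) (j j' : 'I_n.+1) :
  (pi j : nat) = n -> (pi j' : nat) = n -> j' = j.
Proof. by move=> e e'; apply: (@perm_inj _ pi); apply: val_inj => /=; rewrite e e'. Qed.

Lemma ltr_max_top n (pi : 'S_n.+1) (j : 'I_n.+1) : (pi j : nat) = n -> ltr_max pi j.
Proof.
move=> e; apply/forallP => i; apply/implyP => ij; rewrite e.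
have := ltn_ord (pi i); rewrite ltnS leq_eqVlt => /orP [/eqP e'|//].
by move: ij; rewrite (pos_uniq e e') ltnn.
Qed.

Lemma win_char n r (pi : 'S_n.+1) (j : 'I_n.+1) : 0 < r -> (pi j : nat) = n ->
  winnable r pi = (r <= j) && [exists m : 'I_n.+1, (m < r) && isam pi j m].
Proof.
move=> r0 e; apply/idP/idP.
- case/existsP => j' /and4P [rj' _ /forallP Hk /eqP e'].
  have ej := pos_uniq e e'; subst j'.
  rewrite rj' /=.
  have [m am] := isam_exists pi (leq_trans r0 rj').
  apply/existsP; exists m; rewrite am andbT.
  rewrite ltnNge; apply/negP => rm.
  case/andP: (am) => mj /forallP Hm.
  have := implyP (Hk m); rewrite rm mj => /(_ isT) /negP; apply.
  apply/forallP => i; apply/implyP => im.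
  by apply: (implyP (Hm i)); rewrite (ltn_trans im mj); case/andP: (ord_neq im).
- case/andP => rj /existsP [m /andP [mr /andP [mj /forallP Hm]]].
  apply/existsP; exists j; rewrite rj ltr_max_top //= e eqxx andbT.
  apply/forallP => k; apply/implyP => /andP [rk kj]; apply/negP => /forallP H.
  have a := implyP (H m) (leq_trans mr rk).
  have := implyP (Hm k); rewrite kj; case/andP: (ord_neq (leq_trans mr rk)) => _ -> /(_ isT) b.
  by move: (ltn_trans a b); rewrite ltnn.
Qed.

Lemma win0 n (pi : 'S_n.+1) (j : 'I_n.+1) : (pi j : nat) = n ->
  winnable 0 pi = (j == ord0).
Proof.
move=> e; apply/idP/idP.
- case/existsP => j' /and4P [_ _ /forallP Hk /eqP e'].
  have ej := pos_uniq e e'; subst j'.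
  rewrite -[j == _]negbK -lt0n; apply/negP => j0.
  have := implyP (Hk ord0) j0 => /negP; apply.
  by apply/forallP => i; apply/implyP.
- move/eqP => ej; apply/existsP; exists j; rewrite ltr_max_top //= e eqxx andbT.
  by apply/forallP => k; apply/implyP; rewrite ej.
Qed.

Definition cnt n (j m : 'I_n.+1) :=
  \sum_(pi : 'S_n.+1 | ((pi j : nat) == n) && isam pi j m) 1.
Definition dcnt n (j : 'I_n.+1) := \sum_(pi : 'S_n.+1 | (pi j : nat) == n) 1.
Definition C n r (j : 'I_n.+1) :=
  \sum_(pi : 'S_n.+1 | winnable r pi && ((pi j : nat) == n)) 1.

Lemma isam_tperm n (pi : 'S_n.+1) (j m m' : 'I_n.+1) :
  m' < j -> isam pi j m -> isam (tperm m m' * pi)%g j m'.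
Proof.
move=> m'j /andP [mj /forallP H]; rewrite /isam m'j /=.
apply/forallP => i; apply/implyP => /andP [ij im']; rewrite !permM tpermR.
case: tpermP => [E|E|ne1 ne2].
- apply: (implyP (H m')); rewrite m'j /=; apply/eqP => E'.
  by move: im'; rewrite E E' eqxx.
- by move: im'; rewrite E eqxx.
- by apply: (implyP (H i)); rewrite ij; apply/eqP.
Qed.

Lemma tpermKg (T : finType) (x y : T) (p : {perm T}) : (tperm x y * (tperm x y * p))%g = p.
Proof. by rewrite mulgA tperm2 mul1g. Qed.

Lemma cnt_const n (j m m' : 'I_n.+1) : m < j -> m' < j -> cnt j m = cnt j m'.
Proof.
move=> mj m'j; rewrite /cnt (reindex_inj (mulgI (tperm m m'))).
apply: eq_bigl => pi /=.
have -> : (tperm m m' * pi)%g j = pi j.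
  rewrite permM tpermD //; apply/eqP => E; move: (ltnn j).
    by rewrite -{1}E mj.
  by rewrite -{1}E m'j.
congr andb; apply/idP/idP => H.
- by have := isam_tperm m'j H; rewrite tpermKg.
- by have := isam_tperm mj H; rewrite tpermC.
Qed.

Lemma dcnt_const n (j j' : 'I_n.+1) : dcnt j = dcnt j'.
Proof.
rewrite /dcnt (reindex_inj (mulgI (tperm j j'))).
by apply: eq_bigl => pi /=; rewrite permM tpermL.
Qed.

Lemma dcnt_val n (j : 'I_n.+1) : dcnt j = n`!.
Proof.
have H : \sum_(j < n.+1) dcnt j = n.+1`!.
  rewrite /dcnt (exchange_big_dep xpredT) //=.
  rewrite -card_Sn -sum1_card; apply: eq_bigr => pi _.
  apply: (big_pred1 (pi^-1 ord_max)%g) => k /=.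
  rewrite -(inj_eq (@perm_inj _ pi)) permKV.
  by [].
move: H; rewrite (eq_bigr (fun=> dcnt j)) => [|k _]; last exact: dcnt_const.
rewrite sum_nat_const card_ord factS => H.
by apply/eqP; rewrite -(eqn_pmul2l (ltn0Sn n)) H.
Qed.

Lemma split_sum (T I : finType) (P : pred T) (Q : T -> pred I) :
  (forall t m m', Q t m -> Q t m' -> m = m') ->
  \sum_(t | P t && [exists m, Q t m]) 1 = \sum_m \sum_(t | P t && Q t m) 1.
Proof.
move=> U.
rewrite (exchange_big_dep xpredT) //= big_mkcond [RHS]big_mkcond /=.
apply: eq_bigr => t _; case: (P t) => /=; last by rewrite big_pred0.
case: existsP => [[m0 qm0]|nq].
- by rewrite (big_pred1 m0) // => m /=; apply/idP/eqP => [qm|->//]; exact: U qm qm0.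
- by rewrite big_pred0 // => m; apply/negP => qm; apply: nq; exists m.
Qed.

Lemma sum_lt n k c : k <= n.+1 -> \sum_(m < n.+1 | m < k) c = k * c.
Proof.
move=> kn; rewrite -(big_ord_widen _ (fun=> c) kn).
by rewrite sum_nat_const card_ord.
Qed.

Lemma sum_exists n (j : 'I_n.+1) k : 0 < k -> k <= j ->
  \sum_(pi : 'S_n.+1 | ((pi j : nat) == n) && [exists m : 'I_n.+1, (m < k) && isam pi j m]) 1
  = k * cnt j ord0.
Proof.
move=> k0 kj.
rewrite (@split_sum _ _ _ (fun pi (m : 'I_n.+1) => (m < k) && isam pi j m)); last first.
  by move=> pi m m' /andP [_ a] /andP [_ b]; exact: isam_uniq a b.
rewrite -(sum_lt (cnt j ord0) (leq_trans kj (ltnW (ltn_ord j)))).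
rewrite [RHS]big_mkcond /=; apply: eq_bigr => m _.
case: ifP => mk.
- rewrite -(cnt_const (m:=m) (m':=ord0) (leq_trans mk kj) (leq_trans k0 kj)).
  rewrite /cnt; apply: eq_bigl => pi /=.
  by [].
- by apply: big_pred0 => pi /=; rewrite andbF.
Qed.

Lemma C_val n r (j : 'I_n.+1) : 0 < r -> r <= j -> j * C r j = r * n`!.
Proof.
move=> r0 rj.
have Cj : C r j = r * cnt j ord0.
  rewrite -(sum_exists r0 rj) /C; apply: eq_bigl => pi.
  case e: ((pi j : nat) == n); last by rewrite andbF.
  by rewrite andbT /= (win_char r0 (eqP e)) rj.
have Dj : dcnt j = j * cnt j ord0.
  rewrite -(sum_exists (leq_trans r0 rj) (leqnn j)) /dcnt; apply: eq_bigl => pi.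
  case e: ((pi j : nat) == n) => //=.
  have [m am] := isam_exists pi (leq_trans r0 rj).
  by symmetry; apply/existsP; exists m; rewrite am; case/andP: am => ->.
by rewrite Cj -(dcnt_val j) Dj mulnCA.
Qed.

Lemma C_small n r (j : 'I_n.+1) : 0 < r -> j < r -> C r j = 0.
Proof.
move=> r0 jr; rewrite /C big_pred0 // => pi.
case e: ((pi j : nat) == n); last by rewrite andbF.
by rewrite (win_char r0 (eqP e)) leqNgt jr.
Qed.

Lemma C0 n (j : 'I_n.+1) : C 0 j = if j == ord0 then n`! else 0.
Proof.
rewrite /C -(dcnt_val j) /dcnt.
case: ifP => j0.
- apply: eq_bigl => pi; case e: ((pi j : nat) == n); last by rewrite andbF.
  by rewrite (win0 (eqP e)) j0.
- rewrite big_pred0 // => pi; case e: ((pi j : nat) == n); last by rewrite andbF.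
  by rewrite (win0 (eqP e)) j0.
Qed.

From mathcomp Require Import ring.
Local Open Scope ring_scope.

Lemma W_dec (R : realFieldType) (theta : R) n r :
  W theta n.+1 r = \sum_(j < n.+1) (C r j)%:R * theta ^+ j.
Proof.
rewrite /W /weight /= (exchange_big_dep xpredT) //=.
apply: eq_bigr => j _; rewrite /C natr_sum mulr_suml.
by apply: eq_bigr => pi _; rewrite mul1r.
Qed.

Theorem corollary2p2 (R : realFieldType) (theta : R) (N : nat) :
  0 < theta -> (1 <= N)%N ->
  W theta N 0 = (N.-1)`!%:R /\
  (forall r : nat, (1 <= r <= N.-1)%N ->
     W theta N r =
       (N.-1)`!%:R * r%:R * \sum_(r <= i < N) theta ^+ i / i%:R).
Proof.
move=> _; case: N => [//|n] _ /=; split.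
  rewrite W_dec (bigD1 ord0) //= big1 ?addr0; first by rewrite C0 eqxx expr0 mulr1.
  by move=> j j0; rewrite C0 (negbTE j0) mul0r.
move=> r /andP [r1 rn]; rewrite W_dec.
transitivity (\sum_(i < n.+1) (C r (@inord n i))%:R * theta ^+ i).
  by apply: eq_bigr => i _; rewrite inord_val.
rewrite -(big_mkord xpredT (fun i => (C r (inord i))%:R * theta ^+ i)).
rewrite (@big_cat_nat _ _ _ r) //=; last by rewrite (leq_trans rn).
rewrite big_nat_cond big1 ?add0r; last first.
  move=> i /andP [/andP [_ ir] _]; rewrite C_small // ?mul0r //.
  rewrite inordK // ltnS; exact: leq_trans (ltnW ir) rn.
rewrite big_distrr /=; apply: eq_big_nat => i /andP [ri iN].
have ri' : (r <= @inord n i)%N by rewrite inordK.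
have := C_val (leq_trans r1 (leqnn r)) ri'; rewrite inordK // => /(congr1 (fun x => x%:R : R)).
rewrite !natrM => H.
have i0 : i%:R != 0 :> R by rewrite pnatr_eq0 -lt0n (leq_trans r1 ri).
rewrite -[(C r (inord i))%:R](mulKf i0) H.
by field.
Qed.
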